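(* Let $\vec k=(k_1,\dots,k_\ell)$ be a vector of positive integers and $\pi\in\mathcal D_{\vec k}$. Let $(t_1,\dots,t_\ell)$ be the first-row entries of $F=\eta_*(\pi)$. For each $2\le j\le\ell$, let $i$ be the index of the column of $F$ containing the entry $t_j-1$ and let $m_{ij}$ be the row index of $t_j-1$ in $F$. Then the area sequence $(a_1,\dots,a_\ell)$ of $\pi$ satisfies $a_1=0$ and $a_j=a_i+k_i-m_{ij}+1$ for $j\ge2$, and the depth labeling sequence $(d_1,\dots,d_\ell)$ of $\pi$ satisfies $d_1=0$ and $d_j=d_i+m_{ij}-1$ for $j\ge 2$.
   Context: $|\vec k|=k_1+\cdots+k_\ell$, $N=|\vec k|+\ell$. A $\vec k$-Dyck path is a word $\pi=\pi_1\cdots\pi_N$ containing the letters $S^{k_1},\dots,S^{k_\ell}$ exactly once each and in this order, together with $|\vec k|$ letters $W$, such that all starting ranks are nonnegative, where $r_1=0$, $r_{i+1}=r_i+k_j$ if $\pi_i=S^{k_j}$ and $r_{i+1}=r_i-1$ if $\pi_i=W$. $\mathcal D_{\vec k}$ is the set of such paths. The area sequence is $(a_1,\dots,a_\ell)$ where $a_j$ is the starting rank of the letter $S^{k_j}$. Filling algorithm $\eta_*$: in a tableau of $\ell$ top-justified columns, column $i$ having $k_i+1$ cells, place $1$ at the top of column 1; for $i=2,\dots,N$, call an entry active if it is currently the bottom entry of a column $i'$ not yet containing $k_{i'}+1$ entries; if $\pi_i=W$ place $i$ immediately below the largest active entry, otherwise place $i$ at the top of the first empty column. Ranking algorithm $\gamma_*$: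 column 1 of a tableau of the same shape gets ranks $0,1,\dots,k_1$ top to bottom; for $i\ge2$, if the top entry of column $i$ of $\eta_*(\pi)$ is $A+1$ and $A$ has rank $\alpha$, column $i$ gets ranks $\alpha,\alpha+1,\dots,\alpha+k_i$ top to bottom. The depth labeling sequence $(d_1,\dots,d_\ell)$ is the first row of the ranking tableau $\gamma_*(\eta_*(\pi))$. Rows are numbered from $1$ starting at the top. *)

(* Defs.v *)
From mathcomp Require Import all_boot all_order all_algebra.
Set Implicit Arguments. Unset Strict Implicit. Unset Printing Implicit Defensive.
Import GRing.Theory Num.Theory.

(* Conventions: the composition vector k = (k_1,...,k_l) is [k : seq nat],
   indices are 0-based (column/letter j here = j+1 in the paper).
   A letter is [option nat]: [Some j] is S^{k_{j+1}}, [None] is W. *)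

Definition letter := option nat.

Definition step_val (k : seq nat) (x : letter) : int :=
  if x is Some j then (nth 0 k j)%:Z else (-1)%R.

(* starting rank of the letter at (0-based) position i: r_{i+1} in the paper *)
Definition srank (k : seq nat) (pi : seq letter) (i : nat) : int :=
  (\sum_(x <- take i pi) step_val k x)%R.

Definition is_dyck (k : seq nat) (pi : seq letter) : Prop :=
  [/\ pmap id pi = iota 0 (size k),            (* S^{k_1},...,S^{k_l} once each, in order *)
      count (fun x => x == None) pi = sumn k
    & forall i, i < size pi -> (0 <= srank k pi i)%R].

Definition area (k : seq nat) (pi : seq letter) (j : nat) : int :=
  srank k pi (index (Some j) pi).

(* Tableaux: a list of columns, each column listed top to bottom. *)
Definition tableau := seq (seq nat).

Definition column (F : tableau) (c : nat) : seq nat := nth [::] F c.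

Definition is_active (k : seq nat) (F : tableau) (c : nat) : bool :=
  (0 < size (column F c)) && (size (column F c) < (nth 0 k c).+1).

Definition bottom (F : tableau) (c : nat) : nat := last 0 (column F c).

Definition largest_active (k : seq nat) (F : tableau) : option nat :=
  foldl (fun b c =>
           if is_active k F c &&
              (if b is Some b' then bottom F b' < bottom F c else true)
           then Some c else b) None (iota 0 (size k)).

Definition fill_step (k : seq nat) (F : tableau) (i : nat) (x : letter) : tableau :=
  if x is None then
    (if largest_active k F is Some c then set_nth [::] F c (rcons (column F c) i)
     else F)
  else
    let c := find (fun cl => size cl == 0) F in set_nth [::] F c [:: i].

Definition eta (k : seq nat) (pi : seq letter) : tableau :=
  foldl (fun F p => fill_step k F p.1 p.2)
        (set_nth [::] (nseq (size k) [::]) 0 [:: 1])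
        (zip (iota 2 (size pi).-1) (behead pi)).

Definition gamma (k : seq nat) (F : tableau) : tableau :=
  foldl (fun R i =>
           let A := (head 0 (column F i)).-1 in
           let c := find (fun cl => A \in cl) F in
           let alpha := nth 0 (column R c) (index A (column F c)) in
           rcons R (iota alpha (nth 0 k i).+1))
        [:: iota 0 (nth 0 k 0).+1] (iota 1 (size k).-1).

Definition depth (k : seq nat) (pi : seq letter) (j : nat) : nat :=
  head 0 (column (gamma k (eta k pi)) j).

(* Main.v *)
Require Import Defs.
From mathcomp Require Import all_boot all_order all_algebra zify.
Import GRing.Theory Num.Theory.
Set Implicit Arguments. Unset Strict Implicit. Unset Printing Implicit Defensive.

Lemma srankS k pi n : n < size pi ->
  srank k pi n.+1 = (srank k pi n + step_val k (nth None pi n))%R.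
Proof.
move=> hn; rewrite /srank (take_nth None hn) -cats1 big_cat /= big_seq1 //.
Qed.

Lemma pmap_take_iota (pi : seq letter) l n : pmap id pi = iota 0 l ->
  pmap id (take n pi) = iota 0 (size (pmap id (take n pi))).
Proof.
move=> h.
have e := h; rewrite -(cat_take_drop n pi) pmap_cat in e.
have : take (size (pmap id (take n pi))) (iota 0 l) = pmap id (take n pi).
  by rewrite -e take_size_cat.
rewrite take_iota.
have : size (pmap id (take n pi)) <= l.
  by rewrite -(size_iota 0 l) -e size_cat leq_addr.
by move=> /minn_idPl -> e2; rewrite e2.
Qed.

Lemma letter_at (pi : seq letter) l n c : pmap id pi = iota 0 l ->
  n < size pi -> nth None pi n = Some c ->
  c = size (pmap id (take n pi)).
Proof.
move=> h hn hc.
have e1 := pmap_take_iota n.+1 h.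
have e0 := pmap_take_iota n h.
move: e1; rewrite (take_nth None hn) hc -cats1 pmap_cat /=.
set s := size (pmap id (take n pi)) in e0 *.
rewrite e0 size_cat /= size_iota addn1 -addn1 iotaD /= add0n => /eqP.
by rewrite eqseq_cat ?size_iota // => /andP[_ /eqP[->]].
Qed.

Lemma in_pi (pi : seq letter) l c : pmap id pi = iota 0 l -> (Some c \in pi) = (c < l).
Proof.
move=> h; have -> : (c < l) = (c \in iota 0 l) by rewrite mem_iota.
rewrite -h mem_pmap.
apply/idP/mapP => [hc|[x hx ->]]; last by case: x hx.
by exists (Some c).
Qed.

Lemma before_iff (pi : seq letter) l n c : pmap id pi = iota 0 l ->
  n <= size pi -> (Some c \in take n pi) = (c < size (pmap id (take n pi))).
Proof.
move=> h hn.
have -> : (c < size (pmap id (take n pi))) = (c \in iota 0 (size (pmap id (take n pi)))) by rewrite mem_iota.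
rewrite -(pmap_take_iota n h) mem_pmap.
apply/idP/mapP => [hc|[x hx ->]]; last by case: x hx.
by exists (Some c).
Qed.

Lemma T_mono (pi : seq letter) l c c' : pmap id pi = iota 0 l ->
  c < c' -> c' < l -> index (Some c) pi < index (Some c') pi.
Proof.
move=> h lt hl.
have hin : Some c' \in pi by rewrite (in_pi _ h).
have hn : index (Some c') pi < size pi by rewrite index_mem.
have e := letter_at h hn (nth_index None hin).
rewrite -in_take_leq ?(ltnW hn) // (before_iff _ h) ?(ltnW hn) //.
by rewrite -e.
Qed.

Lemma T_le (pi : seq letter) l c c' : pmap id pi = iota 0 l ->
  c <= c' -> c' < l -> index (Some c) pi <= index (Some c') pi.
Proof.
move=> h; rewrite leq_eqVlt => /orP[/eqP->//|lt] hl.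
by rewrite ltnW // (T_mono h).
Qed.

Lemma index_at (pi : seq letter) l n c : pmap id pi = iota 0 l ->
  n < size pi -> nth None pi n = Some c -> index (Some c) pi = n.
Proof.
move=> h hn hc.
have e := letter_at h hn hc.
have nin : Some c \notin take n pi by rewrite (before_iff _ h) ?(ltnW hn) // -e ltnn.
rewrite -(cat_take_drop n pi) index_cat (negbTE nin) (drop_nth None hn) hc /=.
by rewrite eqxx addn0 size_take hn.
Qed.

Lemma sum_step k (s : seq letter) :
  (\sum_(x <- s) step_val k x)%R =
  ((\sum_(c <- pmap id s) nth 0 k c)%N%:Z - (count (fun x => x == None) s)%:Z)%R.
Proof.
elim: s => [|x s IH]; first by rewrite !big_nil.
rewrite big_cons IH; case: x => [c|] /=; rewrite ?big_cons /=; lia.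
Qed.


Definition fr (k : seq nat) (F : tableau) (c : nat) : nat :=
  if size (column F c) == 0 then 0 else (nth 0 k c).+1 - size (column F c).

Record Inv (k : seq nat) (pi : seq letter) (n : nat) (F : tableau) : Prop := {
 iv_size : size F = size k;
 iv_empty : forall c, c < size k -> (size (column F c) == 0) = (n <= index (Some c) pi);
 iv_cap : forall c, size (column F c) <= (nth 0 k c).+1;
 iv_ent : forall c q, q < size (column F c) ->
   [/\ 0 < nth 0 (column F c) q <= n, index (Some c) pi < nth 0 (column F c) q,
       q = 0 -> nth 0 (column F c) q = (index (Some c) pi).+1 &
       (srank k pi (nth 0 (column F c) q) + q%:Z = area k pi c + (nth 0 k c)%:Z)%R ];
 iv_ex : forall x, 0 < x <= n -> exists c q, q < size (column F c) /\ nth 0 (column F c) q = x;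
 iv_uniq : forall c q c' q', q < size (column F c) -> q' < size (column F c') ->
   nth 0 (column F c) q = nth 0 (column F c') q' -> c = c' /\ q = q';
 iv_ord : forall c c', c < c' -> is_active k F c -> is_active k F c' -> bottom F c < bottom F c';
 iv_act : forall c, is_active k F c -> area k pi c = Posz (\sum_(0 <= i < c) fr k F i);
 iv_rank : srank k pi n = Posz (\sum_(0 <= i < size k) fr k F i) }.

Lemma col_upd (F : tableau) c v c' :
  column (set_nth [::] F c v) c' = if c' == c then v else column F c'.
Proof. by rewrite /column nth_set_nth. Qed.

Lemma bottom_le k pi n F c : Inv k pi n F -> 0 < size (column F c) -> bottom F c <= n.
Proof.
move=> iv hs; rewrite /bottom (last_nth 0).
case e: (column F c) hs => [//|y s] _ /=.
have := iv_ent iv (q := size s) (c := c); rewrite e /= ltnSn => /(_ isT) [/andP[_ +] _ _ _].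
by case: s e => //.
Qed.

Lemma fr_upd k F c v i : i != c -> fr k (set_nth [::] F c v) i = fr k F i.
Proof. by move=> /negbTE h; rewrite /fr col_upd h. Qed.


Lemma generic k pi n F c :
  Inv k pi n F ->
  let F' := set_nth [::] F c (rcons (column F c) n.+1) in
  c < size k -> size (column F c) < (nth 0 k c).+1 ->
  (forall c', c' < size k -> (size (column F' c') == 0) = (n.+1 <= index (Some c') pi)) ->
  index (Some c) pi < n.+1 ->
  (size (column F c) = 0 -> n = index (Some c) pi) ->
  (srank k pi n.+1 + (size (column F c))%:Z = area k pi c + (nth 0 k c)%:Z)%R ->
  (forall c', c' != c -> is_active k F c' -> c' < c) ->
  (is_active k F' c -> area k pi c = Posz (\sum_(0 <= i < c) fr k F i)) ->
  srank k pi n.+1 = Posz (\sum_(0 <= i < size k) fr k F' i) ->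
  Inv k pi n.+1 F'.
Proof.
move=> iv F' hc hcap hb hT hhead hsr hord hact hrank.
have colF' c' : column F' c' = if c' == c then rcons (column F c) n.+1 else column F c'.
  by rewrite /F' col_upd.
have actF' c' : c' != c -> is_active k F' c' = is_active k F c'.
  by move=> /negbTE h; rewrite /is_active colF' h.
have ent' c' q : q < size (column F' c') ->
   (q < size (column F c') /\ nth 0 (column F' c') q = nth 0 (column F c') q) \/
   (c' = c /\ q = size (column F c) /\ nth 0 (column F' c') q = n.+1).
  rewrite colF'; case: eqP => [->|_]; last by left.
  rewrite size_rcons ltnS leq_eqVlt nth_rcons => /orP[/eqP->|->]; last by left.
  by right; rewrite ltnn eqxx.
split.
- by rewrite size_set_nth (iv_size iv); apply/maxn_idPr.
- exact: hb.
- move=> c'; rewrite colF'; case: eqP => [->|_]; last by apply: (iv_cap iv c').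
  by rewrite size_rcons.
- move=> c' q /ent' [[hq ->]|[-> [-> ->]]].
    have [/andP[h1 h2] h3 h4 h5] := iv_ent iv hq.
    by split => //; rewrite h1 /= ltnW.
  split => //; first by rewrite leqnn.
  by move=> h0; rewrite (hhead h0).
- move=> x /andP[x0]; rewrite leq_eqVlt => /orP[/eqP->|xn].
    exists c, (size (column F c)); rewrite colF' eqxx size_rcons ltnSn nth_rcons ltnn eqxx.
    by [].
  have [c' [q [hq hx]]] := iv_ex iv (x := x) (ltac:(by rewrite x0)).
  exists c', q; rewrite colF'; case: eqP => [e|_]; last by [].
  by subst c'; rewrite size_rcons nth_rcons hq ltnW.
- move=> c1 q1 c2 q2 /ent' h1 /ent' h2.
  case: h1 => [[hq1 ->]|[-> [-> ->]]]; case: h2 => [[hq2 ->]|[-> [-> ->]]] //.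
  + exact: (iv_uniq iv hq1 hq2).
  + move=> e; have [/andP[_ +] _ _ _] := iv_ent iv hq1; rewrite e ltnn //.
  + move=> e; have [/andP[_ +] _ _ _] := iv_ent iv hq2; rewrite -e ltnn //.
- have bF' c' : bottom F' c' = if c' == c then n.+1 else bottom F c'.
    by rewrite /bottom colF'; case: eqP => // _; rewrite last_rcons.
  move=> c1 c2 lt12 a1 a2; rewrite !bF'.
  case: (eqVneq c1 c) => [e1|n1]; case: (eqVneq c2 c) => [e2|n2].
  + by subst; rewrite ltnn in lt12.
  + subst c1; rewrite actF' // in a2; have := hord _ n2 a2; lia.
  + rewrite actF' // in a1; apply: (leq_ltn_trans (bottom_le iv _)) => //.
    by case/andP: a1.
  + rewrite actF' // in a1; rewrite actF' // in a2; exact: (iv_ord iv lt12 a1 a2).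
- move=> c'; case: (eqVneq c' c) => [->|nc] a.
    by rewrite hact //; congr Posz; apply: eq_big_nat => i /andP[_ hi];
       rewrite fr_upd // neq_ltn hi.
  rewrite actF' // in a; rewrite (iv_act iv a); congr Posz.
  apply: eq_big_nat => i /andP[_ hi]; rewrite fr_upd //.
  by rewrite neq_ltn (ltn_trans hi (hord _ nc a)).
- exact: hrank.
Qed.


Lemma srank_end k pi : is_dyck k pi -> srank k pi (size pi) = 0%R.
Proof.
case=> h1 h2 _; rewrite /srank take_size sum_step h1 h2.
suff -> : \sum_(c <- iota 0 (size k)) nth 0 k c = sumn k by rewrite subrr.
by rewrite [RHS]sumnE [RHS](big_nth 0) /index_iota subn0.
Qed.

Lemma srank_ge0 k pi n : is_dyck k pi -> n <= size pi -> (0 <= srank k pi n)%R.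
Proof.
move=> d; rewrite leq_eqVlt => /orP[/eqP->|hn]; first by rewrite srank_end.
by case: d => _ _; apply.
Qed.

Lemma find_eq (T : Type) x0 (p : pred T) (s : seq T) i : i < size s -> p (nth x0 s i) ->
  (forall j, j < i -> ~~ p (nth x0 s j)) -> find p s = i.
Proof.
elim: s i => [//|y s IH] [|i] /= hi hp hb; first by rewrite hp.
have := hb 0 isT; rewrite /= => /negbTE ->; congr S; apply: IH => // j hj.
exact: (hb j.+1).
Qed.

Lemma split_sum (f : nat -> nat) c l : c < l ->
  \sum_(0 <= i < l) f i = \sum_(0 <= i < c) f i + f c + \sum_(c.+1 <= i < l) f i.
Proof. by move=> hc; rewrite (@big_cat_nat _ _ _ c) ?(ltnW hc) // (@big_ltn _ _ _ c l) //= addnA. Qed.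

Lemma sum0 (f : nat -> nat) m l : (forall i, m <= i < l -> f i = 0) -> \sum_(m <= i < l) f i = 0.
Proof. by move=> h; rewrite big_nat_cond big1 // => i /andP[hi _]; apply: h. Qed.

Lemma active_lt k pi n F c : Inv k pi n F -> is_active k F c -> c < size k.
Proof.
move=> iv /andP[h _]; rewrite -(iv_size iv); move: h; rewrite /column.
by case: (ltnP c (size F)) => // hc; rewrite nth_default.
Qed.

Lemma nonempty_lt k pi n F c : Inv k pi n F -> 0 < size (column F c) -> c < size k.
Proof.
move=> iv h; rewrite -(iv_size iv); move: h; rewrite /column.
by case: (ltnP c (size F)) => // hc; rewrite nth_default.
Qed.

Definition la_step k F := (fun b c =>
           if is_active k F c &&
              (if b is Some b' then bottom F b' < bottom F c else true)
           then Some c else b).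

Lemma la_spec k F m :
  (forall c c', c < c' -> is_active k F c -> is_active k F c' -> bottom F c < bottom F c') ->
  match foldl (la_step k F) None (iota 0 m) with
  | None => forall c, c < m -> ~~ is_active k F c
  | Some b => [/\ b < m, is_active k F b & forall c, c < m -> is_active k F c -> c <= b]
  end.
Proof.
move=> ho; elim: m => [|m IH]; first by [].
rewrite -addn1 iotaD add0n cats1 foldl_rcons.
case: (foldl _ _ _) IH => [b [hb ab hmax]|hnone]; rewrite /la_step.
  case ha: (is_active k F m) => /=.
    rewrite (ho _ _ hb ab ha); split => //; first by rewrite addn1.
    by move=> c; rewrite addn1 ltnS.
  split => //; first by rewrite addn1 ltnS ltnW.
  move=> c; rewrite addn1 ltnS leq_eqVlt => /orP[/eqP->|]; first by rewrite ha.
  exact: hmax.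
case ha: (is_active k F m) => /=.
  split => //; first by rewrite addn1.
  by move=> c; rewrite addn1 ltnS.
move=> c; rewrite addn1 ltnS leq_eqVlt => /orP[/eqP->|]; first by rewrite ha.
exact: hnone.
Qed.


Lemma T_inj (pi : seq letter) l c c' : pmap id pi = iota 0 l -> c < l -> c' < l ->
  index (Some c) pi = index (Some c') pi -> c = c'.
Proof.
move=> h hc hc' e.
have := nth_index None (x := Some c) (s := pi); rewrite (in_pi _ h) hc e nth_index ?(in_pi _ h) //.
by move=> /(_ isT) [].
Qed.

Lemma started k pi n F c : Inv k pi n F -> c < size k ->
  (0 < size (column F c)) = (index (Some c) pi < n).
Proof. by move=> iv hc; rewrite lt0n (iv_empty iv hc) -ltnNge. Qed.

Lemma step k pi n F : is_dyck k pi -> Inv k pi n F -> 0 < n -> n < size pi ->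
  Inv k pi n.+1 (fill_step k F n.+1 (nth None pi n)).
Proof.
move=> d iv n0 hn; have [h1 h2 h3] := d.
have nthT c : c < size k -> nth None pi (index (Some c) pi) = Some c.
  by move=> hc; rewrite nth_index // (in_pi _ h1).
have Tlt c : c < size k -> index (Some c) pi < size pi.
  by move=> hc; rewrite index_mem (in_pi _ h1).
case hx: (nth None pi n) => [c|] /=.
-
  have hc : c < size k by rewrite -(in_pi _ h1) -hx mem_nth.
  have Tc : index (Some c) pi = n by apply: (index_at h1).
  have emp : size (column F c) = 0 by apply/eqP; rewrite (iv_empty iv hc) Tc.
  have below c' : c' < c -> 0 < size (column F c').
    move=> lt; rewrite (started iv (ltn_trans lt hc)) -Tc; exact: (T_mono h1).
  have above c' : c <= c' -> size (column F c') = 0.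
    move=> le; case: (ltnP c' (size k)) => hc'.
      by apply/eqP; rewrite (iv_empty iv hc') -Tc (T_le h1).
    by rewrite /column nth_default // (iv_size iv).
  have -> : find (fun cl => size cl == 0) F = c.
    apply: (@find_eq _ [::] (fun cl : seq nat => size cl == 0)); first by rewrite (iv_size iv).
      by rewrite -/(column F c) emp.
    by move=> j hj; rewrite -/(column F j) -lt0n below.
  have -> : [:: n.+1] = rcons (column F c) n.+1 by rewrite (size0nil emp).
  have frc : fr k F c = 0 by rewrite /fr emp.
  have sumF : \sum_(0 <= i < size k) fr k F i = \sum_(0 <= i < c) fr k F i.
    rewrite (split_sum _ hc) frc addn0 (@sum0 _ c.+1 (size k)) ?addn0 // => i /andP[hi _].
    by rewrite /fr above ?(ltnW hi).
  have srn : srank k pi n.+1 = (srank k pi n + (nth 0 k c)%:Z)%R by rewrite srankS // hx.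
  have areac : area k pi c = srank k pi n by rewrite /area Tc.
  apply: generic => //.
  + by rewrite emp.
  + move=> c' hc'; rewrite col_upd; case: (eqVneq c' c) => [->|nc].
      by rewrite size_rcons Tc ltnn.
    have ne : index (Some c') pi != n.
      by apply/eqP => e; move/eqP: nc; apply; apply: (T_inj h1 hc' hc); rewrite Tc.
    by rewrite (iv_empty iv hc') [in LHS]leq_eqVlt eq_sym (negbTE ne).
  + by rewrite Tc.
  + by rewrite emp srn areac addr0.
  + move=> c' nc /andP[ne _]; have hc' := nonempty_lt iv ne.
    rewrite (started iv hc') -Tc in ne.
    by case: (ltnP c' c) => // le; move: ne; rewrite ltnNge (T_le h1).
  + by move=> _; rewrite areac (iv_rank iv) sumF.
  + rewrite srn (iv_rank iv) (split_sum _ hc) [in RHS](split_sum _ hc).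
    have e1 : \sum_(0 <= i < c) fr k (set_nth [::] F c (rcons (column F c) n.+1)) i =
              \sum_(0 <= i < c) fr k F i.
      by apply: eq_big_nat => i /andP[_ hi]; rewrite fr_upd // neq_ltn hi.
    have e2 : \sum_(c.+1 <= i < size k) fr k (set_nth [::] F c (rcons (column F c) n.+1)) i =
              \sum_(c.+1 <= i < size k) fr k F i.
      by apply: eq_big_nat => i /andP[hi _]; rewrite fr_upd // neq_ltn hi orbT.
    have e3 : fr k (set_nth [::] F c (rcons (column F c) n.+1)) c = nth 0 k c.
      by rewrite /fr col_upd eqxx size_rcons emp /= subSS subn0.
    by rewrite e1 e2 frc e3 -PoszD; congr Posz; rewrite addn0 addnAC.
-
  have srn : srank k pi n.+1 = (srank k pi n - 1)%R.
    by rewrite srankS // hx.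
  have pos := srank_ge0 d hn.
  have frz i : ~~ is_active k F i -> fr k F i = 0.
    rewrite /fr /is_active; case: eqP => // /eqP; rewrite -lt0n => -> /=.
    by rewrite -leqNgt -subn_eq0 => /eqP.
  have -> : largest_active k F = foldl (la_step k F) None (iota 0 (size k)) by [].
  have LA := la_spec (size k) (iv_ord iv).
  case: (foldl _ _ _) LA => [cs [hcs acs hmax]|hnone]; last first.
    exfalso; move: pos; rewrite srn (iv_rank iv) sum0; first by [].
    by move=> i /andP[_ hi]; apply: frz; apply: hnone.
  have [ne0 cap] := andP acs.
  have Tcs : index (Some cs) pi < n by rewrite -(started iv hcs).
  have Tne c' : c' < size k -> index (Some c') pi != n.
    by move=> hc'; apply/eqP => e; move: hx; rewrite -e nthT.
  have rest : \sum_(cs.+1 <= i < size k) fr k F i = 0.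
    apply: sum0 => i /andP[hi _]; apply: frz; apply/negP => ai.
    by have := hmax i (active_lt iv ai) ai; rewrite leqNgt hi.
  have frcs : fr k F cs = (nth 0 k cs).+1 - size (column F cs).
    by rewrite /fr (negbTE (lt0n_neq0 ne0)).
  set F' := set_nth [::] F cs (rcons (column F cs) n.+1).
  have frcs' : fr k F' cs = (nth 0 k cs).+1 - (size (column F cs)).+1.
    by rewrite /fr /F' col_upd eqxx size_rcons.
  have e1 : \sum_(0 <= i < cs) fr k F' i = \sum_(0 <= i < cs) fr k F i.
    by apply: eq_big_nat => i /andP[_ hi]; rewrite fr_upd // neq_ltn hi.
  have e2 : \sum_(cs.+1 <= i < size k) fr k F' i = \sum_(cs.+1 <= i < size k) fr k F i.
    by apply: eq_big_nat => i /andP[hi _]; rewrite fr_upd // neq_ltn hi orbT.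
  have rk := iv_rank iv; rewrite (split_sum _ hcs) rest frcs in rk.
  have ar := iv_act iv acs.
  apply: generic => //.
  + move=> c' hc'; rewrite col_upd; case: (eqVneq c' cs) => [->|nc].
      by rewrite size_rcons /= ltnNge (ltnW Tcs).
    by rewrite (iv_empty iv hc') [in LHS]leq_eqVlt eq_sym (negbTE (Tne _ hc')).
  + exact: ltnW.
  + by move=> e; rewrite e in ne0.
  + rewrite srn rk ar; move: cap ne0; set sz := size (column F cs) => cap ne0.
    have E : (k`_cs)%R = nth 0%N k cs by [].
    rewrite E; lia.
  + move=> c' nc ac; have := hmax c' (active_lt iv ac) ac.
    by rewrite leq_eqVlt (negbTE nc).
  + rewrite srn rk (split_sum _ hcs) e1 e2 rest frcs' addn0.
    move: cap ne0; set sz := size (column F cs) => cap ne0.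
    lia.
Qed.


Definition F1 (k : seq nat) : tableau := set_nth [::] (nseq (size k) [::]) 0 [:: 1].

Definition Ef k pi n := foldl (fun F p => fill_step k F p.1 p.2) (F1 k)
   (map (fun i => (i, nth None pi i.-1)) (iota 2 n.-1)).

Lemma zip_iota (s : seq letter) a :
  zip (iota a (size s)) s = map (fun i => (i, nth None s (i - a))) (iota a (size s)).
Proof.
elim: s a => [//|x s IH] a /=; rewrite subnn IH; congr cons.
apply/eq_in_map => i; rewrite mem_iota => /andP[hi _].
by have -> : i - a = (i - a.+1).+1 by lia.
Qed.

Lemma eta_E k pi : eta k pi = Ef k pi (size pi).
Proof.
rewrite /eta /Ef -size_behead zip_iota; congr foldl.
apply/eq_in_map => i; rewrite mem_iota => /andP[hi _]; congr pair.
rewrite nth_behead; congr nth; lia.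
Qed.

Lemma Ef_S k pi n : 0 < n -> Ef k pi n.+1 = fill_step k (Ef k pi n) n.+1 (nth None pi n).
Proof.
case: n => [//|m] _; rewrite /Ef.
have e : iota 2 (m + 1) = iota 2 m ++ [:: m.+2] by rewrite iotaD add2n.
rewrite addn1 in e.
change (iota 2 m.+2.-1) with (iota 2 m.+1); change (iota 2 m.+1.-1) with (iota 2 m).
by rewrite e map_cat foldl_cat.
Qed.


Lemma first_letter k pi : is_dyck k pi -> 0 < size k ->
  0 < size pi /\ nth None pi 0 = Some 0.
Proof.
move=> d hk; have [h1 h2 h3] := d.
have in0 : Some 0 \in pi by rewrite (in_pi _ h1).
have sp : 0 < size pi by case: (pi) in0.
split => //.
case e: (nth None pi 0) => [c|].
  by rewrite (letter_at h1 sp e) take0.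
exfalso; have : 1 < size pi.
  case: (pi) e in0 => [//|y [|z s]] /= -> //.
move=> /h3; rewrite srankS // e.
by rewrite /srank take0 big_nil.
Qed.

Lemma col_F1 k c : column (F1 k) c = if c == 0 then [:: 1] else [::].
Proof. by rewrite /F1 col_upd /column nth_nseq if_same. Qed.

Lemma Inv_base k pi : is_dyck k pi -> 0 < size k -> Inv k pi 1 (F1 k).
Proof.
move=> d hk; have [h1 h2 h3] := d.
have [sp e0] := first_letter d hk.
have T0 : index (Some 0) pi = 0 by apply: (index_at h1).
have ar0 : area k pi 0 = 0%R by rewrite /area T0 /srank take0 big_nil.
have sr1 : srank k pi 1 = Posz (nth 0 k 0) by rewrite srankS // e0 /srank take0 big_nil add0r.
have ent c q : q < size (column (F1 k) c) -> c = 0 /\ q = 0.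
  by rewrite col_F1; case: (eqVneq c 0) => [->|//]; case: q.
split.
- by rewrite /F1 size_set_nth size_nseq; apply/maxn_idPr.
- move=> c hc; rewrite col_F1; case: (eqVneq c 0) => [->|nc]; first by rewrite T0.
  by have := T_mono h1 (c := 0) (c' := c); rewrite T0 lt0n nc => /(_ isT hc).
- by move=> c; rewrite col_F1; case: (c == 0).
- move=> c q /ent [-> ->]; rewrite col_F1 /= T0; split => //.
  by rewrite sr1 ar0 addr0 add0r.
- move=> x hx; exists 0, 0; rewrite col_F1 /=; split => //; lia.
- by move=> c q c' q' /ent [-> ->] /ent [-> ->].
- move=> c c' lt /andP[a _] /andP[a' _]; move: a a'; rewrite !col_F1.
  by case: (eqVneq c 0) => // ->; case: (eqVneq c' 0) => // e; rewrite e in lt.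
- move=> c /andP[a _]; move: a; rewrite col_F1; case: (eqVneq c 0) => // -> _.
  by rewrite ar0 big_geq.
- rewrite sr1 (split_sum _ hk) big_geq // sum0 ?addn0.
    by rewrite /fr col_F1 /= subSS subn0.
  by move=> i /andP[hi _]; rewrite /fr col_F1; case: (eqVneq i 0) => // e; rewrite e in hi.
Qed.

Lemma Inv_all k pi n : is_dyck k pi -> 0 < size k -> 0 < n <= size pi ->
  Inv k pi n (Ef k pi n).
Proof.
move=> d hk; elim: n => [//|n IH] /andP[_ hn].
case: n IH hn => [|n] IH hn; first exact: Inv_base.
rewrite Ef_S //; apply: step => //; apply: IH; lia.
Qed.


Lemma foldl_prefix (g : tableau -> nat -> seq nat) (R : tableau) s :
  size (foldl (fun R i => rcons R (g R i)) R s) = size R + size s /\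
  forall x, x < size R -> nth [::] (foldl (fun R i => rcons R (g R i)) R s) x = nth [::] R x.
Proof.
elim: s R => [|y s IH] R /=; first by rewrite addn0.
have [IH1 IH2] := IH (rcons R (g R y)).
split; first by rewrite IH1 size_rcons addSnnS.
move=> x hx; rewrite IH2 ?size_rcons ?nth_rcons ?hx //; exact: ltnW.
Qed.

Definition gfun (k : seq nat) (F : tableau) (R : tableau) (i : nat) : seq nat :=
  let A := (head 0 (column F i)).-1 in
  let c := find (fun cl => A \in cl) F in
  let alpha := nth 0 (column R c) (index A (column F c)) in
  iota alpha (nth 0 k i).+1.

Lemma gamma_eq k F : gamma k F =
  foldl (fun R i => rcons R (gfun k F R i)) [:: iota 0 (nth 0 k 0).+1] (iota 1 (size k).-1).
Proof. by []. Qed.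

Lemma gamma_col0 k F : column (gamma k F) 0 = iota 0 (nth 0 k 0).+1.
Proof. by rewrite gamma_eq /column (proj2 (foldl_prefix _ _ _)). Qed.

Lemma gamma_colj k F j : 0 < j < size k ->
  let A := (head 0 (column F j)).-1 in
  let c := find (fun cl => A \in cl) F in
  c < j ->
  column (gamma k F) j = iota (nth 0 (column (gamma k F) c) (index A (column F c))) (nth 0 k j).+1.
Proof.
move=> /andP[j0 jl] A c cj.
have e : iota 1 (size k).-1 = iota 1 j.-1 ++ j :: iota j.+1 ((size k).-1 - j).
  set L := (size k).-1 - j.
  have -> : (size k).-1 = j.-1 + L.+1 by rewrite /L; lia.
  have e1 : 1 + j.-1 = j by lia.
  by rewrite iotaD /= e1.
set g := fun R i => rcons R (gfun k F R i).
have [s1 _] := foldl_prefix (gfun k F) [:: iota 0 (nth 0 k 0).+1] (iota 1 j.-1).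
set Rj := foldl _ _ (iota 1 j.-1) in s1.
have hRj : size Rj = j by rewrite s1 size_iota /=; lia.
have G : gamma k F = foldl g (rcons Rj (gfun k F Rj j)) (iota j.+1 ((size k).-1 - j)).
  by rewrite gamma_eq e foldl_cat.
have [_ p2] := foldl_prefix (gfun k F) (rcons Rj (gfun k F Rj j)) (iota j.+1 ((size k).-1 - j)).
have ec : nth [::] (foldl g (rcons Rj (gfun k F Rj j)) (iota j.+1 ((size k).-1 - j))) c = nth [::] Rj c.
  by rewrite p2 ?size_rcons ?hRj ?ltnS ?(ltnW cj) // (@nth_rcons (seq nat)) hRj cj.
have ej : nth [::] (foldl g (rcons Rj (gfun k F Rj j)) (iota j.+1 ((size k).-1 - j))) j = gfun k F Rj j.
  by rewrite p2 ?size_rcons ?hRj // (@nth_rcons (seq nat)) hRj ltnn eqxx.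
by rewrite /column G ec ej.
Qed.


Lemma find_col k pi F x : Inv k pi (size pi) F -> forall i q, q < size (column F i) ->
  nth 0 (column F i) q = x ->
  find (fun cl => x \in cl) F = i /\ index x (column F i) = q.
Proof.
move=> iv i q hq hx.
have hi : i < size F by rewrite (iv_size iv); apply: nonempty_lt iv (leq_ltn_trans (leq0n _) hq).
split.
  apply: (@find_eq _ [::] (fun cl : seq nat => x \in cl)) => //.
    by rewrite -/(column F i) -hx mem_nth.
  move=> j' hj'; apply/negP; rewrite -/(column F j') => hin.
  have hm : index x (column F j') < size (column F j') by rewrite index_mem.
  have := iv_uniq iv hm hq; rewrite hx nth_index //.
  by move=> /(_ erefl) [e _]; rewrite e ltnn in hj'.
have hin : x \in column F i by rewrite -hx mem_nth.
have hm : index x (column F i) < size (column F i) by rewrite index_mem.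
have := iv_uniq iv hm hq; rewrite nth_index // hx.
by move=> /(_ erefl) [_ ->].
Qed.

Lemma headT k pi F j : Inv k pi (size pi) F -> j < size k -> index (Some j) pi < size pi ->
  (head 0 (column F j)).-1 = index (Some j) pi.
Proof.
move=> iv jl Tjs.
have ne : 0 < size (column F j) by rewrite (started iv jl).
have [_ _ hd _] := iv_ent iv ne.
by case: (column F j) hd ne => // y s /= ->.
Qed.

Theorem lemma4p13 (k : seq nat) (pi : seq letter) :
  all (fun x => 0 < x) k ->
  is_dyck k pi ->
  let F := eta k pi in
  let t := fun j => head 0 (column F j) in
  area k pi 0 = 0%R /\ depth k pi 0 = 0 /\
  forall j, 1 <= j < size k ->
    (exists i m, [/\ i < size k, 0 < m, m <= size (column F i)
                   & nth 0 (column F i) m.-1 = (t j).-1]) /\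
    (forall i m, i < size k -> 0 < m -> m <= size (column F i) ->
       nth 0 (column F i) m.-1 = (t j).-1 ->
       area k pi j = (area k pi i + (nth 0 k i)%:Z - m%:Z + 1)%R /\
       depth k pi j = depth k pi i + m - 1).
Proof.
move=> _ d F t; have [h1 h2 h3] := d.
have dep0 : depth k pi 0 = 0 by rewrite /depth gamma_col0.
case: (posnP (size k)) => [k0|kpos].
  split; last by split => // j; rewrite k0; lia.
  have nin : Some 0 \notin pi by rewrite (in_pi _ h1) k0.
  by rewrite /area memNindex // srank_end.
have [sp e0] := first_letter d kpos.
have T0 : index (Some 0) pi = 0 by apply: (index_at h1).
split; first by rewrite /area T0 /srank take0 big_nil.
split => //.
have iv : Inv k pi (size pi) F by rewrite /F eta_E; apply: Inv_all => //; rewrite sp leqnn.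
have Tlt c : c < size k -> index (Some c) pi < size pi.
  by move=> hc; rewrite index_mem (in_pi _ h1).
have colGj i : 0 < i < size k -> forall c q, q < size (column F c) ->
     nth 0 (column F c) q = index (Some i) pi ->
     column (gamma k F) i = iota (nth 0 (column (gamma k F) c) q) (nth 0 k i).+1.
  move=> /andP[i0 il] c q hq hx.
  have [fc ic] := find_col iv hq hx.
  have [_ Tc _ _] := iv_ent iv hq; rewrite hx in Tc.
  have ci : c < i.
    case: (ltnP c i) => // le; move: Tc.
    by rewrite ltnNge (T_le h1) // (nonempty_lt iv (leq_ltn_trans (leq0n _) hq)).
  have := @gamma_colj k F i; rewrite i0 il /= (headT iv) ?Tlt // fc => /(_ isT ci).
  by rewrite ic.
have colG i : i < size k -> column (gamma k F) i = iota (depth k pi i) (nth 0 k i).+1.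
  case: (posnP i) => [->|i0] hi; first by rewrite dep0 gamma_col0.
  have Ti0 : 0 < index (Some i) pi by rewrite -T0 (T_mono h1).
  have [c [q [hq hx]]] := iv_ex iv (x := index (Some i) pi) (ltac:(rewrite Ti0 ltnW ?Tlt //)).
  have E := colGj i (ltac:(by rewrite i0 hi)) c q hq hx.
  by rewrite /depth -/F E.
move=> j /andP[j1 jl].
have Tjs : index (Some j) pi < size pi by rewrite index_mem (in_pi _ h1).
have Tj0 : 0 < index (Some j) pi by rewrite -T0 (T_mono h1).
have tj : (t j).-1 = index (Some j) pi by rewrite /t (headT iv).
rewrite tj; split.
  have [c [q [hq hx]]] := iv_ex iv (x := index (Some j) pi) (ltac:(rewrite Tj0 ltnW //)).
  exists c, q.+1; split => //; exact: nonempty_lt iv (leq_ltn_trans (leq0n _) hq).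
move=> i m hi m0 hm hx.
have hq : m.-1 < size (column F i) by lia.
have [_ Ti _ sr] := iv_ent iv hq.
rewrite hx in Ti sr; split.
  move: sr; rewrite [area k pi j]/area.
  move: (area k pi i) (srank k pi (index (Some j) pi)) => a s; lia.
have E := colGj j (ltac:(by rewrite j1 jl)) i m.-1 hq hx.
have capi : m.-1 < (nth 0 k i).+1 by apply: (leq_trans hq); exact: iv_cap iv i.
have hd a n : head 0 (iota a n.+1) = a by [].
rewrite /depth -/F E (colG i hi) hd nth_iota // hd; lia.
Qed.
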